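(* Let $m\ge1$ and let $p\ge 2m-1$ be a prime. Let $0\le k\le\lfloor\frac{m+1}{2}\rfloor+1$ and let $n$ be a non-negative integer with $n<N_k$. Then $$\mathrm{ex}(n,m,p)\ge \nu_p(n!)-(k-1).$$
   Context: Partitions $\lambda=(\lambda_1\ge\dots\ge\lambda_r\ge0)$ may have zero parts; the degree sequence is $n_\lambda=(\lambda_r,\lambda_{r-1}+1,\dots,\lambda_1+r-1)=(n_{\lambda,1},\dots,n_{\lambda,r})$ and $\Delta(n_\lambda)=\prod_{i<j}(n_{\lambda,j}-n_{\lambda,i})$. $H(\lambda)=n_{\lambda,1}!\cdots n_{\lambda,r}!/\Delta(n_\lambda)$ (the product of hook lengths) and $F_\lambda=|\lambda|!/H(\lambda)$ is the dimension of the irreducible representation of the symmetric group $S_{|\lambda|}$ indexed by $\lambda$. $\nu_p$ is the $p$-adic valuation. Removing a $2$-hook means replacing an entry $a$ of $n_\lambda$ by $a-2\ge0$ with $a-2\notin n_\lambda$; removing $2$-hooks until impossible yields the $2$-core, a staircase $(m',m'-1,\dots,1)$ padded with zeros, of size $\binom{m'+1}2$. Define $\mathrm{ex}(n,m,p)=\min\{\nu_p(F_\lambda):\lambda\vdash n,\ \lambda\text{ has }2\text{-core of size }\binom{m+1}{2}\}$ (the minimum over the empty set is $+\infty$). For $0\le k\le\lfloor\frac{m+1}2\rfloor$ put $N_k=kp-k(2(m-k)+1)+\binom{m+1}{2}$, and put $N_{\lfloor\frac{m+1}2\rfloor+1}=(\lfloor\frac{m+1}2\rfloor+1)p$. *)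

(* Defs.v *)
From mathcomp Require Import all_boot all_order.
From mathcomp Require Import ssralg ssrnum ssrint.
Set Implicit Arguments. Unset Strict Implicit. Unset Printing Implicit Defensive.

(* A partition is represented by the seq [:: l_1; ...; l_r] of its parts,
   nonincreasing.  We allow zero parts (as in the paper). *)
Definition is_partition_of (n : nat) (l : seq nat) : bool :=
  sorted geq l && (sumn l == n).

(* degree sequence n_l = (l_r, l_{r-1}+1, ..., l_1 + r - 1) *)
Definition degseq (l : seq nat) : seq nat :=
  let r := size l in [seq nth 0 l (r - 1 - i) + i | i <- iota 0 r].

Definition vandermonde (s : seq nat) : nat :=
  \prod_(0 <= j < size s) \prod_(0 <= i < j) (nth 0 s j - nth 0 s i).

(* H(l) = n_1! ... n_r! / Delta(n_l)  (product of hook lengths) *)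
Definition hookprod (l : seq nat) : nat :=
  (\prod_(a <- degseq l) a`!) %/ vandermonde (degseq l).

Definition Fdim (l : seq nat) : nat := (sumn l)`! %/ hookprod l.

(* One 2-hook removal: replace the first entry a of s with 2 <= a and
   a - 2 \notin s by a - 2; None if no 2-hook can be removed. *)
Fixpoint remove_hook_aux (pre s0 : seq nat) (s : seq nat) : option (seq nat) :=
  match s with
  | [::] => None
  | a :: t => if (2 <= a) && (a - 2 \notin s0) then Some (pre ++ (a - 2) :: t)
              else remove_hook_aux (rcons pre a) s0 t
  end.
Definition remove_hook (s : seq nat) : option (seq nat) := remove_hook_aux [::] s s.

(* remove 2-hooks until impossible (fuel = sum of entries suffices, since each
   removal decreases the sum by 2) *)
Fixpoint remove_hooks (fuel : nat) (s : seq nat) : seq nat :=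
  match fuel with
  | 0 => s
  | f.+1 => if remove_hook s is Some s' then remove_hooks f s' else s
  end.

Definition core2_beta (l : seq nat) : seq nat :=
  remove_hooks (sumn (degseq l)) (degseq l).

Definition size_of_beta (s : seq nat) : nat := sumn s - 'C(size s, 2).

Definition core2_size (l : seq nat) : nat := size_of_beta (core2_beta l).

Fixpoint partsb (fuel n b : nat) : seq (seq nat) :=
  if n == 0 then [:: [::]] else
  match fuel with
  | 0 => [::]
  | f.+1 => flatten [seq [seq a :: l | l <- partsb f (n - a) a] | a <- iota 1 (minn n b)]
  end.

(* all partitions of n (without zero parts; zero parts do not change F_l nor
   the 2-core size) *)
Definition partitions (n : nat) : seq (seq nat) :=
  [seq l <- partsb n n n | is_partition_of n l].

(* minimum of a list, None = +infinity for the empty list *)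
Definition omin (s : seq nat) : option nat :=
  foldr (fun x o => Some (if o is Some y then minn x y else x)) None s.

(* ex(n,m,p) ; None stands for +infinity *)
Definition ex (n m p : nat) : option nat :=
  omin [seq logn p (Fdim l) | l <- partitions n & core2_size l == 'C(m.+1, 2)].

Definition oge (o : option nat) (x : int) : Prop :=
  if o is Some e then (x <= (Posz e))%R else True.

Definition Nk (m p k : nat) : int :=
  if k <= (m.+1)./2 then
    (Posz (k * p) - Posz (k * (2 * (m - k) + 1)) + Posz 'C(m.+1, 2))%R
  else Posz (((m.+1)./2).+1 * p).

(* Main.v *)
Require Import Defs.
From mathcomp Require Import all_boot all_order.
From mathcomp Require Import ssralg ssrnum ssrint.
From mathcomp Require Import zify.
Set Implicit Arguments. Unset Strict Implicit. Unset Printing Implicit Defensive.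

Lemma bin2_dbl r : 2 * 'C(r, 2) = r * r.-1.
Proof.
elim: r => [//|r IH]; rewrite binS bin1 mulnDr IH; case: r {IH} => //= r; lia.
Qed.

Lemma sumn_iota0 r : sumn (iota 0 r) = 'C(r, 2).
Proof. by rewrite sumnE -bin2_sum /index_iota subn0. Qed.

Lemma L0_aux B s : uniq s -> all (fun x => x < B) s -> 'C(size s, 2) <= sumn s.
Proof.
elim: B s => [|B IH] s us.
  by case: s us => // a s _ /=; rewrite ltn0.
move=> hall.
case: (boolP (B \in s)) => hB; last first.
  apply: IH => //; apply/allP => x hx; move/allP: hall => /(_ x hx).
  rewrite ltnS leq_eqVlt; case/orP => // /eqP ex; by rewrite -ex hx in hB.
have hp := perm_to_rem hB.
have ur : uniq (rem B s) by rewrite rem_uniq.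
have sz : size s = (size (rem B s)).+1 by rewrite (perm_size hp).
have hr : 'C(size (rem B s), 2) <= sumn (rem B s).
  apply: IH => //; apply/allP => x hx.
  have xs : x \in s := mem_rem hx.
  move/allP: hall => /(_ x xs); rewrite ltnS leq_eqVlt; case/orP => // /eqP ex.
  by move: hx; rewrite ex mem_rem_uniqF.
have hsz : size s <= B.+1.
  have -> : B.+1 = size (iota 0 B.+1) by rewrite size_iota.
  apply: uniq_leq_size => // x hx; rewrite mem_iota /=; by move/allP: hall => /(_ x hx).
rewrite (perm_sumn hp) /= sz binS bin1 addnC.
apply: leq_add => //; lia.
Qed.

Lemma L0 s : uniq s -> 'C(size s, 2) <= sumn s.
Proof.
move=> us; apply: (@L0_aux (sumn s).+1) => //; apply/allP => x hx; rewrite ltnS.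
elim: s {us} hx => // a s IH; rewrite inE /=; case/orP => [/eqP->|/IH]; lia.
Qed.

Lemma sumn_map_half b s : all (fun x => odd x == b) s ->
  sumn s = 2 * sumn (map half s) + b * size s.
Proof.
elim: s => [|a s IH] /=; first lia.
move=> /andP [/eqP ha hs]; rewrite IH //.
have := odd_double_half a; rewrite ha -muln2; lia.
Qed.

Lemma uniq_half b s : all (fun x => odd x == b) s -> uniq s -> uniq (map half s).
Proof.
move=> hall us; rewrite map_inj_in_uniq // => x y hx hy hxy.
move/allP: hall => hall; have := hall x hx; have := hall y hy => /eqP hy' /eqP hx'.
by rewrite -(odd_double_half x) -(odd_double_half y) hx' hy' hxy.
Qed.

Lemma Lpar b s : uniq s -> all (fun x => odd x == b) s ->
  2 * 'C(size s, 2) + b * size s <= sumn s.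
Proof.
move=> us hall; rewrite (sumn_map_half hall) leq_add2r leq_mul2l /=.
by rewrite -(size_map half); apply: L0; apply: (uniq_half hall).
Qed.

Lemma sumn_filterC (P : pred nat) s : sumn s = sumn (filter P s) + sumn (filter (predC P) s).
Proof. elim: s => //= a s ->; case: (P a) => /=; lia. Qed.

Definition codd (s : seq nat) := count odd s.

Lemma all_filter_odd s : all (fun x => odd x == true) (filter odd s).
Proof. by apply/allP => x; rewrite mem_filter => /andP [-> _]. Qed.
Lemma all_filter_even s : all (fun x => odd x == false) (filter (predC odd) s).
Proof. by apply/allP => x; rewrite mem_filter => /andP [/negbTE -> _]. Qed.

Lemma Lcore s : uniq s ->
  (size s - codd s) * (size s - codd s - 1) + codd s * codd s <= sumn s.
Proof.
move=> us.
have h1 := Lpar (filter_uniq odd us) (all_filter_odd s).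
have h0 := Lpar (filter_uniq (predC odd) us) (all_filter_even s).
rewrite size_filter in h1; rewrite size_filter in h0.
have e : count (predC odd) s = size s - codd s by rewrite /codd -(count_predC odd s); lia.
rewrite e !bin2_dbl in h0; rewrite !bin2_dbl in h1; rewrite (sumn_filterC odd s).
move: h0 h1; rewrite -/(codd s).
case: (size s - codd s) => [|b0']; case: (codd s) => [|b1'] /=; nia.
Qed.

Definition closed2 (s : seq nat) := forall x, x \in s -> 2 <= x -> x - 2 \in s.

Lemma closed2_down s x t : closed2 s -> x \in s -> 2 * t <= x -> x - 2 * t \in s.
Proof.
move=> hc hx; elim: t => [|t IH] ht; first by rewrite muln0 subn0.
have h : x - 2 * t \in s by apply: IH; lia.
have := hc _ h; rewrite -subnDA. have -> : 2 * t + 2 = 2 * t.+1 by lia.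
apply; lia.
Qed.

Lemma half_lt_size s x : uniq s -> closed2 s -> x \in s -> x./2 < size s.
Proof.
move=> us hc hx.
pose T := [seq x - 2 * t | t <- iota 0 (x./2).+1].
have hT : uniq T.
  rewrite map_inj_in_uniq ?iota_uniq // => a b; rewrite !mem_iota /= !add0n => ha hb.
  have := odd_double_half x; move: ha hb; rewrite !ltnS -!muln2; lia.
have sub : {subset T <= s}.
  move=> y /mapP [t]; rewrite mem_iota add0n ltnS => /andP [_ ht] ->.
  apply: closed2_down => //; have := odd_double_half x; rewrite -muln2; lia.
have := uniq_leq_size hT sub; rewrite size_map size_iota //.
Qed.

Lemma stuck_par b s : uniq s -> all (fun x => odd x == b) s -> closed2 s ->
  sumn s = 2 * 'C(size s, 2) + b * size s.
Proof.
move=> us hall hc; rewrite (sumn_map_half hall).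
congr (_ + _); congr (_ * _).
have uh := uniq_half hall us.
have sub : {subset map half s <= iota 0 (size s)}.
  move=> y /mapP [x hx ->]; rewrite mem_iota add0n; exact: half_lt_size.
have hsz : size (iota 0 (size s)) <= size (map half s) by rewrite size_iota size_map.
have [_ eqm] := uniq_min_size uh sub hsz.
by rewrite (perm_sumn (uniq_perm uh (iota_uniq 0 _) eqm)) sumn_iota0.
Qed.

Lemma closed2_filter (P : pred nat) s : (forall x, 2 <= x -> P (x - 2) = P x) ->
  closed2 s -> closed2 (filter P s).
Proof.
move=> hP hc x; rewrite !mem_filter => /andP [px xs] h2.
by rewrite hP // px hc.
Qed.

Lemma odd_sub2 x : 2 <= x -> odd (x - 2) = odd x.
Proof. by case: x => [|[|x]] //= _; rewrite !subSS subn0 negbK. Qed.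

Lemma stuck_sum s : uniq s -> closed2 s ->
  sumn s = (size s - codd s) * (size s - codd s - 1) + codd s * codd s.
Proof.
move=> us hc.
have h1 := stuck_par (filter_uniq odd us) (all_filter_odd s)
   (closed2_filter (fun x h => odd_sub2 h) hc).
have h0 := stuck_par (filter_uniq (predC odd) us) (all_filter_even s)
   (closed2_filter (P := predC odd) (fun x h => congr1 negb (odd_sub2 h)) hc).
rewrite size_filter in h1; rewrite size_filter in h0.
have e : count (predC odd) s = size s - codd s by rewrite /codd -(count_predC odd s); lia.
rewrite e !bin2_dbl in h0; rewrite !bin2_dbl in h1; rewrite (sumn_filterC odd s) h0 h1.
rewrite -/(codd s).
case: (size s - codd s) => [|b0']; case: (codd s) => [|b1'] /=; nia.
Qed.

Lemma rha_some pre s0 s s' : remove_hook_aux pre s0 s = Some s' ->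
  exists pre' a t, [/\ pre ++ s = pre' ++ a :: t, s' = pre' ++ (a - 2) :: t,
     2 <= a & a - 2 \notin s0].
Proof.
elim: s pre => //= a t IH pre.
case: ifP => [/andP [h1 h2] [<-] | _ /IH [pre' [a' [t' [e1 e2 e3 e4]]]]].
  by exists pre, a, t.
exists pre', a', t'; split => //; by rewrite -e1 cat_rcons.
Qed.

Lemma rha_none pre s0 s : remove_hook_aux pre s0 s = None ->
  forall a, a \in s -> 2 <= a -> a - 2 \in s0.
Proof.
elim: s pre => //= a t IH pre.
case: ifP => // /negbT; rewrite negb_and negbK => h /IH H x; rewrite inE.
case/orP => [/eqP -> | /H //]; by case/orP: h => [/negbTE -> |].
Qed.

Lemma rh_some s s' : uniq s -> remove_hook s = Some s' ->
  [/\ uniq s', size s' = size s, sumn s' + 2 = sumn s & codd s' = codd s].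
Proof.
move=> us /rha_some [pre [a [t [/= e1 -> h2 h3]]]].
move: us h3; rewrite e1 /codd !cat_uniq !size_cat !sumn_cat !count_cat /=.
move=> /and4P [u1 /norP [na u2] u3 u4].
rewrite mem_cat inE negb_or negb_or => /and3P [nap _ nat].
split.
- by rewrite u1 u4 nat (negbTE nap) (negbTE u2).
- by [].
- lia.
- rewrite odd_sub2 //.
Qed.

Lemma rh_none s : remove_hook s = None -> closed2 s.
Proof. move=> /rha_none H x xs h; exact: H. Qed.

Lemma rhs_props fuel s : uniq s -> sumn s <= fuel ->
  let R := remove_hooks fuel s in
  [/\ uniq R, size R = size s, codd R = codd s & closed2 R].
Proof.
elim: fuel s => [|f IH] s us hs /=.
  split => // x xs h2; move: hs; rewrite leqn0 => /eqP hs.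
  have : x <= sumn s by elim: s xs {us hs} => //= a s IHs; rewrite inE => /orP [/eqP ->|/IHs]; lia.
  lia.
case e: (remove_hook s) => [s'|].
  have [u' sz' sm' c'] := rh_some us e.
  have hf : sumn s' <= f by lia.
  have [] := IH s' u' hf; rewrite sz' c' //.
by split => //; apply: rh_none.
Qed.

Lemma degseq_nth l i : i < size l ->
  nth 0 (degseq l) i = nth 0 l (size l - 1 - i) + i.
Proof. by move=> hi; rewrite /degseq (nth_map 0) ?size_iota // nth_iota. Qed.

Lemma size_degseq l : size (degseq l) = size l.
Proof. by rewrite /degseq size_map size_iota. Qed.

Lemma degseq_sorted l : sorted geq l -> sorted ltn (degseq l).
Proof.
move=> hs; rewrite /degseq.
apply: (homo_sorted_in (P := fun i => i < size l)); last first.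
  - exact: iota_ltn_sorted.
  - by apply/allP => i; rewrite mem_iota add0n.
move=> i j hi hj hij /=.
have hi' : i < size l := hi. have hj' : j < size l := hj. have hij' : i < j := hij.
have : nth 0 l (size l - 1 - i) <= nth 0 l (size l - 1 - j).
  have gt : transitive geq by move=> a b c h1 h2; exact: leq_trans h2 h1.
  have := @sorted_leq_nth _ geq gt (fun x => leqnn x) 0 l hs (size l - 1 - j) (size l - 1 - i).
  apply; rewrite ?inE /=; lia.
lia.
Qed.

Lemma degseq_uniq l : sorted geq l -> uniq (degseq l).
Proof. move=> hs; apply: (sorted_uniq ltn_trans ltnn); exact: degseq_sorted. Qed.

Lemma degseq_sum l : sumn (degseq l) = sumn l + 'C(size l, 2).
Proof.
rewrite /degseq -sumn_iota0.
have -> : sumn l = sumn (rev l) by rewrite sumn_rev.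
have -> : rev l = [seq nth 0 l (size l - 1 - i) | i <- iota 0 (size l)].
  apply: (@eq_from_nth _ 0); first by rewrite size_rev size_map size_iota.
  move=> i; rewrite size_rev => hi; rewrite nth_rev // (nth_map 0) ?size_iota // nth_iota //.
  congr nth; lia.
elim: (iota 0 (size l)) => //= a s ->; lia.
Qed.

Lemma core2_size_eq l : sorted geq l ->
  let X := degseq l in
  core2_size l + 'C(size l, 2) =
   (size l - codd X) * (size l - codd X - 1) + codd X * codd X.
Proof.
move=> hs X.
have uX : uniq X := degseq_uniq hs.
have [uR szR cR clR] := rhs_props uX (leqnn (sumn X)).
rewrite /core2_size /core2_beta /size_of_beta -/X.
set R := remove_hooks _ _ in uR szR cR clR *.
have hR := L0 uR.
have e := stuck_sum uR clR.
rewrite szR size_degseq in hR e; rewrite cR in e; rewrite e in hR *; rewrite szR size_degseq; lia.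
Qed.

Definition gq q (X : seq nat) x := count (fun y => (y \notin X) && (q %| x - y)) (iota 0 x).
Definition G q X := sumn [seq gq q X x | x <- X].

Lemma find_move q (X : seq nat) N x y : 0 < q -> x \in X -> y < x -> y \notin X -> q %| x - y ->
  x - y <= N -> exists2 x0, x0 \in X & (q <= x0) && (x0 - q \notin X).
Proof.
move=> q0; elim: N x => [|N IH] x xX yx yX dq hN; first lia.
have hq : q <= x - y by apply: dvdn_leq => //; lia.
case: (boolP (x - q \in X)) => h; last by exists x => //; rewrite h andbT; lia.
have ne : x - q != y by apply/negP => /eqP e; by move: yX; rewrite -e h.
apply: (IH (x - q)) => //; first lia.
- have -> : x - q - y = (x - y) - q by lia.
  by rewrite dvdn_sub.
- lia.
Qed.

Lemma G_pos_move q (X : seq nat) : 0 < q -> 0 < G q X ->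
  exists2 x0, x0 \in X & (q <= x0) && (x0 - q \notin X).
Proof.
move=> q0; rewrite /G.
have gen : forall s, 0 < sumn [seq gq q X x | x <- s] -> exists2 x, x \in s & 0 < gq q X x.
  elim => //= a s IH; case: (posnP (gq q X a)) => [->|h] /= hs.
    by have [x xs hx] := IH hs; exists x => //; rewrite inE xs orbT.
  by exists a => //; rewrite inE eqxx.
move=> /gen [x xX]; rewrite /gq -has_count => /hasP [y]; rewrite mem_iota add0n => /andP [_ yx] /andP [yX dq].
exact: (find_move (N := x - y) q0 xX yx yX dq).
Qed.

Lemma count_split (a b : pred nat) s :
  count a s = count (predI a b) s + count (predI a (predC b)) s.
Proof. elim: s => //= x s ->; case: (a x); case: (b x) => /=; lia. Qed.

Lemma count_le1 u s (P : pred nat) : uniq s -> (forall y, y \in s -> P y -> y = u) -> count P s <= 1.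
Proof.
move=> us hP; apply: (@leq_trans (count (pred1 u) s)).
  rewrite (@eq_in_count _ P (fun y => (y \in s) && P y)); last by move=> y ->.
  by apply: sub_count => y /andP [ys /(hP _ ys) ->]; rewrite /= eqxx.
by rewrite count_uniq_mem //; case: (u \in s).
Qed.

Section Move.
Variables (q : nat) (X : seq nat) (x0 : nat).
Hypotheses (q0 : 0 < q) (uX : uniq X) (x0X : x0 \in X) (qx0 : q <= x0) (nX : x0 - q \notin X).
Let u := x0 - q.
Let X' := u :: rem x0 X.

Lemma memX' y : (y \in X') = (y == u) || ((y != x0) && (y \in X)).
Proof. by rewrite inE (mem_rem_uniq _ uX) inE. Qed.

Lemma g1 : gq q X x0 <= (gq q X' u).+1.
Proof.
rewrite /gq.
have -> : x0 = u + q by rewrite /u; lia.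
rewrite iotaD count_cat add0n -addn1; apply: leq_add.
  rewrite leq_eqVlt; apply/orP; left; apply/eqP; apply: eq_in_count => y.
  rewrite mem_iota add0n => /andP [_ yu].
  have -> : u + q - y = q + (u - y) by lia.
  rewrite dvdn_addr // memX'.
  have -> : (y == u) = false by apply/negbTE; rewrite neq_ltn yu.
  have -> : (y != x0) = true by apply/eqP => e; lia.
  by [].
apply: (count_le1 (u := u) (iota_uniq _ _)) => y; rewrite mem_iota => /andP [h1 h2] /andP [_ dq].
have : q <= u + q - y by apply: dvdn_leq => //; lia.
lia.
Qed.
Lemma g2 z : z \in X -> z != x0 -> gq q X z <= gq q X' z.
Proof.
move=> zX zx0; rewrite /gq.
set P := (fun y => _); set P' := (fun y => _).
rewrite (count_split P P') (count_split P' P) [count (predI P' P) _](@eq_count _ _ (predI P P')); last first.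
  by move=> y /=; rewrite andbC.
rewrite leq_add2l.
have c1 : count (predI P (predC P')) (iota 0 z) <= (u < z) && (q %| z - u).
  case: (boolP ((u < z) && (q %| z - u))) => hc.
    apply: (count_le1 (u := u) (iota_uniq _ _)) => y _ /andP [] /andP [yX dq] /=.
    rewrite /P' memX' negb_and negbK dq orbF (negbTE yX) andbF orbF => /eqP //.
  rewrite leqn0 -(negbK (_ == 0)) -lt0n -has_count; apply/hasP => [[y]].
  rewrite mem_iota add0n => /andP [_ yz] /andP [] /andP [yX dq] /=.
  rewrite /P' memX' negb_and negbK dq orbF (negbTE yX) andbF orbF => /eqP e.
  by move: hc; rewrite -e yz dq.
apply: (leq_trans c1); case/boolP: ((u < z) && (q %| z - u)) => // /andP [uz dq].
have hq : q <= z - u by apply: dvdn_leq => //; lia.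
have zx : x0 < z by move: zx0; rewrite neq_ltn => /orP [|//]; rewrite /u in hq; lia.
rewrite -has_count; apply/hasP; exists x0; first by rewrite mem_iota; lia.
rewrite /= /P' /P memX' x0X eqxx /= andbT orbF.
have -> : (x0 == u) = false by apply/negbTE/eqP; rewrite /u; lia.
have -> : z - x0 = (z - u) - q by rewrite /u; lia.
by rewrite dvdn_sub.
Qed.

End Move.

Lemma sumn_map_le (f g : nat -> nat) (s : seq nat) : (forall x, x \in s -> f x <= g x) ->
  sumn (map f s) <= sumn (map g s).
Proof.
elim: s => //= a s IH h; apply: leq_add; first by apply: h; rewrite inE eqxx.
by apply: IH => x xs; apply: h; rewrite inE xs orbT.
Qed.

Lemma move1 q X : 0 < q -> uniq X -> 0 < G q X ->
  exists X', [/\ uniq X', size X' = size X, sumn X' + q = sumn X,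
    (codd X' <= (codd X).+1) && (codd X <= (codd X').+1) & G q X <= (G q X').+1].
Proof.
move=> q0 uX /(G_pos_move q0) [x0 x0X /andP [qx nX]].
have hp := perm_to_rem x0X.
exists ((x0 - q) :: rem x0 X).
have hc : count odd X = odd x0 + count odd (rem x0 X) by rewrite (permP hp).
have hs : sumn X = x0 + sumn (rem x0 X) by rewrite (perm_sumn hp).
split.
- by rewrite /= rem_uniq // andbT; apply/negP => /mem_rem; rewrite (negbTE nX).
- by rewrite (perm_size hp).
- rewrite hs /=; lia.
- rewrite /codd hc /=; case: (odd _); case: (odd _) => /=; lia.
- rewrite /G (perm_sumn (perm_map _ hp)) /=.
  rewrite -addn1 -addnA [_ + 1]addnC addnA addn1.
  apply: leq_add; first exact: g1.
  apply: sumn_map_le => z zr; apply: g2 => //.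
  + exact: mem_rem zr.
  + by apply/negP => /eqP e; move: zr; rewrite e mem_rem_uniqF.
Qed.

Lemma moveK q k X : 0 < q -> uniq X -> k <= G q X ->
  exists X', [/\ uniq X', size X' = size X, sumn X' + k * q = sumn X,
    codd X' <= codd X + k & codd X <= codd X' + k].
Proof.
move=> q0; elim: k X => [|k IH] X uX hk.
  by exists X; split => //; rewrite ?addn0.
have [X1 [u1 s1 e1 /andP [c1 c2] g]] := move1 q0 uX (leq_trans (ltn0Sn k) hk).
have hk1 : k <= G q X1 by lia.
have [X2 [u2 s2 e2 d1 d2]] := IH X1 u1 hk1.
exists X2; split => //; [congruence | lia | lia | lia].
Qed.

Lemma lemQ q X : 0 < q -> uniq X -> q * G q X + 'C(size X, 2) <= sumn X.
Proof.
move=> q0 uX; have [X' [u' s' e' _ _]] := moveK q0 uX (leqnn (G q X)).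
have := L0 u'; rewrite s' -e'; lia.
Qed.

Definition Pr (X : seq nat) := \prod_(x <- X) \prod_(y <- iota 0 x | y \notin X) (x - y).

Lemma fact_iota x : x`! = \prod_(y <- iota 0 x) (x - y).
Proof.
elim: x => [|x IH]; first by rewrite big_nil.
have -> : iota 0 x.+1 = 0 :: map succn (iota 0 x).
  by rewrite /= -(addn0 1) iotaDl; congr (_ :: _); apply: eq_map => y; rewrite add1n.
rewrite factS big_cons big_map subn0 IH; congr (_ * _).
Qed.

Section Sorted.
Variable X : seq nat.
Hypothesis sX : sorted ltn X.

Lemma nth_lt i j : i < j -> j < size X -> nth 0 X i < nth 0 X j.
Proof.
move=> hij hj; apply: (sorted_ltn_nth ltn_trans 0 sX) => //; rewrite inE; lia.
Qed.

Lemma nth_lt_inv i j : i < size X -> j < size X -> nth 0 X i < nth 0 X j -> i < j.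
Proof.
move=> hi hj h; rewrite ltnNge; apply/negP; rewrite leq_eqVlt => /orP [/eqP e|].
  by move: h; rewrite e ltnn.
by move=> /(nth_lt)/(_ hi); rewrite ltnNge => /negP; apply; apply: ltnW.
Qed.

Lemma mem_take_nth j y : j <= size X -> (y \in take j X) = [exists i : 'I_j, y == nth 0 X i].
Proof.
move=> hj; apply/idP/existsP => [yt|[i /eqP ->]].
  have hi := index_mem y (take j X); rewrite yt size_take_min (minn_idPl hj) in hi.
  exists (Ordinal hi); apply/eqP; rewrite -(nth_take 0 hi) nth_index //.
rewrite -(nth_take 0 (ltn_ord i)); apply: mem_nth; rewrite size_take_min (minn_idPl hj).
exact: ltn_ord.
Qed.

Lemma iota_filter_take j : j < size X ->
  filter (mem X) (iota 0 (nth 0 X j)) = take j X.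
Proof.
move=> hj.
apply: (irr_sorted_eq ltn_trans ltnn).
- by apply: sorted_filter; [exact: ltn_trans | exact: iota_ltn_sorted].
- exact: (take_sorted (leT := ltn) j sX).
move=> y; rewrite mem_filter mem_iota add0n /= mem_take_nth; last lia.
apply/andP/existsP => [[yX hy]|[i /eqP ->]].
  have hi := index_mem y X; rewrite yX in hi.
  have ey := nth_index 0 yX.
  have hij : index y X < j by apply: nth_lt_inv => //; rewrite ey.
  by exists (Ordinal hij); rewrite /= ey.
have hi : i < j := ltn_ord i.
split; first exact: mem_nth _ (ltn_trans hi hj).
exact: nth_lt.
Qed.

Lemma prod_fact : \prod_(a <- X) a`! = vandermonde X * Pr X.
Proof.
rewrite /vandermonde /Pr (big_nth 0 (r := X) _ (fun a => a`!)).
rewrite (big_nth 0 (r := X) _ (fun x => \prod_(y <- iota 0 x | y \notin X) (x - y))) -big_split /=.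
rewrite !big_nat; apply: eq_bigr => j /andP [_ hj].
rewrite fact_iota (bigID (fun y => y \in X)) /=; congr (_ * _).
rewrite -big_filter iota_filter_take // (big_nth 0) size_take_min (minn_idPl (ltnW hj)).
rewrite !big_nat; apply: eq_bigr => i /andP [_ hi]; by rewrite nth_take.
Qed.
End Sorted.

Lemma prod_pos_seq (r : seq nat) (P : pred nat) (F : nat -> nat) :
  (forall i, i \in r -> P i -> 0 < F i) -> 0 < \prod_(i <- r | P i) F i.
Proof.
elim: r => [|a r IH] h; first by rewrite big_nil.
have h' : forall i, i \in r -> P i -> 0 < F i by move=> i ir; apply: h; rewrite inE ir orbT.
rewrite big_cons; case: ifP => Pa; last exact: IH h'.
by rewrite muln_gt0 (h a) ?inE ?eqxx // (IH h').
Qed.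

Lemma logn_prod_seq p (r : seq nat) (P : pred nat) (F : nat -> nat) :
  (forall i, i \in r -> P i -> 0 < F i) ->
  logn p (\prod_(i <- r | P i) F i) = \sum_(i <- r | P i) logn p (F i).
Proof.
elim: r => [|a r IH] h; first by rewrite !big_nil logn1.
have h' : forall i, i \in r -> P i -> 0 < F i by move=> i ir; apply: h; rewrite inE ir orbT.
rewrite !big_cons; case: ifP => Pa; last exact: IH.
rewrite lognM ?IH //; first by apply: h => //; rewrite inE eqxx.
exact: prod_pos_seq.
Qed.

Lemma Pr_pos X : 0 < Pr X.
Proof.
apply: prod_pos_seq => x _ _; apply: prod_pos_seq => y; rewrite mem_iota; lia.
Qed.

Lemma logn_sum_dvd p t J : prime p -> 0 < t -> t <= J ->
  logn p t = \sum_(1 <= j < J.+1) (p ^ j %| t).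
Proof.
move=> pp t0 tJ; rewrite logn_count_dvd //.
have p1 : 1 < p := prime_gt1 pp.
case: t t0 tJ => // t _ tJ.
case: t tJ => [|t] tJ.
  rewrite big_geq // big1_seq // => j /andP [_]; rewrite mem_index_iota => /andP [h1 _].
  rewrite dvdn1 -(expn0 p) eqn_exp2l //; by case: j h1.
rewrite (@big_cat_nat _ _ _ t.+2 1 J.+1) //=; last lia.
rewrite [X in _ = _ + X]big1_seq ?addn0 // => j /andP [_]; rewrite mem_index_iota => /andP [h1 _].
case: (boolP (p ^ j %| t.+2)) => // /(dvdn_leq (ltn0Sn _)) hle.
have := ltn_expl t.+2 p1; have := leq_pexp2l (ltnW p1) h1; lia.
Qed.

Lemma sum_bool_count (s : seq nat) (a b : pred nat) :
  \sum_(i <- s | a i) (b i : nat) = count (fun i => a i && b i) s.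
Proof. elim: s => [|x s IH]; first by rewrite big_nil. rewrite big_cons /= IH; by case: (a x). Qed.

Lemma logn_Pr p X J : prime p -> (forall x, x \in X -> x <= J) ->
  logn p (Pr X) = \sum_(1 <= j < J.+1) G (p ^ j) X.
Proof.
move=> pp hJ; rewrite /Pr logn_prod_seq; last first.
  move=> x _ _; apply: prod_pos_seq => y; rewrite mem_iota; lia.
rewrite (eq_big_seq (fun x => \sum_(1 <= j < J.+1) \sum_(y <- iota 0 x | y \notin X) (p ^ j %| x - y))); last first.
  move=> x xX; rewrite logn_prod_seq; last by move=> y; rewrite mem_iota; lia.
  rewrite -exchange_big /= big_seq_cond [RHS]big_seq_cond; apply: eq_bigr => y; rewrite mem_iota => /andP [/andP [_ yx] _].
  apply: logn_sum_dvd => //; first lia.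
  have := hJ x xX; lia.
rewrite exchange_big /=; apply: eq_bigr => j _.
rewrite /G sumnE big_map; apply: eq_bigr => x _.
by rewrite sum_bool_count.
Qed.

Lemma mem_le_sumn (X : seq nat) x : x \in X -> x <= sumn X.
Proof. elim: X => //= a s IH; rewrite inE => /orP [/eqP ->|/IH]; lia. Qed.

Lemma G_le_div X n q : 0 < q -> uniq X -> sumn X = n + 'C(size X, 2) -> G q X <= n %/ q.
Proof.
move=> q0 uX hs; rewrite leq_divRL //; have := lemQ q0 uX; rewrite hs; lia.
Qed.

Lemma Pr_dvd_fact X n : uniq X -> sumn X = n + 'C(size X, 2) -> Pr X %| n`!.
Proof.
move=> uX hs; apply/(dvdn_partP _ (Pr_pos X)) => l; rewrite mem_primes => /and3P [pl _ _].
rewrite p_part pfactor_dvdn ?fact_gt0 // (logn_Pr pl (J := sumn X)); last exact: mem_le_sumn.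
rewrite logn_fact //.
have l1 : 1 < l := prime_gt1 pl.
have nJ : n <= sumn X by lia.
apply: (@leq_trans (\sum_(1 <= j < (sumn X).+1) n %/ l ^ j)).
  apply: leq_sum => j _; apply: G_le_div => //; rewrite expn_gt0; lia.
rewrite (@big_cat_nat _ _ _ n.+1 1 (sumn X).+1) //= ?ltnS //.
rewrite [X in _ + X <= _]big1_seq ?addn0 // => j /andP [_]; rewrite mem_index_iota => /andP [h1 _].
apply: divn_small; have := ltn_expl n l1; have := leq_pexp2l (ltnW l1) (ltnW h1); lia.
Qed.

Module Arith.
Import GRing.Theory Num.Theory Order.TTheory.
Local Open Scope ring_scope.

Lemma tri_mono (a b : int) : -1 <= a -> a <= b -> a * (a + 1) <= b * (b + 1).
Proof.
move=> ha hab.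
have : 0 <= (b - a) * (b + a + 1).
  case: (lerP 0 a) => h; first by apply: mulr_ge0; lia.
  have -> : a = -1 by lia.
  case: (lerP 0 b) => hb; first by apply: mulr_ge0; lia.
  have -> : b = -1 by lia.
  by [].
nia.
Qed.

Lemma arithA (m k : nat) (d d' : int) : (2 * k <= m + 1)%N ->
  (m%:Z) * (m%:Z + 1) = d * (d + 1) -> d' - d <= 2 * k%:Z -> d - d' <= 2 * k%:Z ->
  (m%:Z - 2 * k%:Z) * (m%:Z - 2 * k%:Z + 1) <= d' * (d' + 1).
Proof.
move=> hk hm h1 h2.
have : (d - m%:Z) * (d + m%:Z + 1) = 0 by lia.
move/eqP; rewrite mulf_eq0 => /orP [] /eqP e.
  by apply: tri_mono; lia.
have -> : d' * (d' + 1) = (- d' - 1) * (- d' - 1 + 1) by lia.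
apply: tri_mono; lia.
Qed.

Lemma bin2_dbl' r : (2 * 'C(r, 2) = r * r.-1)%N.
Proof.
elim: r => [//|r IH]; rewrite binS bin1 mulnDr IH; case: r {IH} => //= r; lia.
Qed.

Lemma Nk_le_p2 m p k : (2 <= p)%N -> (1 <= m)%N -> (2 * m - 1 <= p)%N -> (1 <= k)%N ->
  (k <= ((m.+1)./2).+1)%N -> Nk m p k <= (p * p)%:Z.
Proof.
move=> p2 m1 hp k1 hk; rewrite /Nk.
have hc := bin2_dbl' m.+1; simpl in hc.
case: ifP => hk2.
  have hkm : (k <= m)%N by lia.
  have e : Posz (k * (2 * (m - k) + 1))%N = (k%:Z) * (2 * m%:Z - 2 * k%:Z + 1) by nia.
  rewrite e.
  have h0 : 0 <= (k%:Z - 1) * (2 * m%:Z - 2 * k%:Z - 1).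
    case: (ltngtP k 1) => hk1; first lia; last by rewrite hk1 subrr mul0r.
    apply: mulr_ge0; lia.
  have h3 : 0 <= p%:Z * (p%:Z + 1 - 2 * m%:Z) by apply: mulr_ge0; lia.
  have h4 : 0 <= (p%:Z + 1 - 2 * m%:Z) * (p%:Z + 1 + 2 * m%:Z) by apply: mulr_ge0; lia.
  have h5 : 0 <= p%:Z * (m%:Z + 1 - 2 * k%:Z) by apply: mulr_ge0; lia.
  nia.
have hk3 : (m.+1./2.+1 <= p)%N by lia.
have := leq_mul hk3 (leqnn p); lia.
Qed.

Lemma pz_pred a : Posz (a * (a - 1))%N = a%:Z * (a%:Z - 1).
Proof. case: a => [|a]; first by []. rewrite subSS subn0 PoszM -addn1 PoszD. lia. Qed.

Lemma finalA (m p k n b0 b1 b0' b1' S S' C Cm : nat) :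
  (1 <= m)%N -> (k <= (m.+1)./2)%N -> (b0 + b1 = b0' + b1')%N ->
  (2 * Cm = m.+1 * m)%N -> (2 * C = (b0 + b1) * (b0 + b1 - 1))%N ->
  (Cm + C = b0 * (b0 - 1) + b1 * b1)%N ->
  S = (n + C)%N -> (S' + k * p = S)%N -> (b1' <= b1 + k)%N -> (b1 <= b1' + k)%N ->
  (b0' * (b0' - 1) + b1' * b1' <= S')%N ->
  (Posz (k * p)%N - Posz (k * (2 * (m - k) + 1))%N + Posz Cm <= Posz n).
Proof.
move=> m1 hk hr hCm hC hc hS hS' c1 c2 hL.
have hkm : (k <= m)%N by lia.
have hk2 : (2 * k <= m + 1)%N by lia.
have e : Posz (k * (2 * (m - k) + 1))%N = (k%:Z) * (2 * m%:Z - 2 * k%:Z + 1).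
  rewrite PoszM PoszD PoszM -subzn //; lia.
rewrite e PoszM.
move: (congr1 Posz hCm) (congr1 Posz hC) (congr1 Posz hc) (congr1 Posz hS) (congr1 Posz hS').
rewrite !(pz_pred, PoszD, PoszM) => I1 I2 I3 I4 I5.
move: hL; rewrite -lez_nat !(pz_pred, PoszD, PoszM) => I6.
move: (congr1 Posz hr); rewrite !PoszD => I7.
move: c1 c2; rewrite -!lez_nat !PoszD => I8 I9.
have hm : (m%:Z) * (m%:Z + 1) = (b1%:Z - b0%:Z) * (b1%:Z - b0%:Z + 1).
  clear -I1 I2 I3; lia.
have hA := @arithA m k (b1%:Z - b0%:Z) (b1'%:Z - b0'%:Z) hk2 hm.
have hA' : (m%:Z - 2 * k%:Z) * (m%:Z - 2 * k%:Z + 1) <= (b1'%:Z - b0'%:Z) * (b1'%:Z - b0'%:Z + 1).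
  apply: hA; lia.
clear -hA' I1 I2 I3 I4 I5 I6 I7; lia.
Qed.

End Arith.
Import Arith.

Lemma oge_omin (s : seq nat) (x : int) : (forall e, e \in s -> (x <= Posz e)%R) -> oge (omin s) x.
Proof.
elim: s => //= a s IH h.
have ha := h a (mem_head _ _).
have hs : forall e, e \in s -> (x <= Posz e)%R by move=> e es; apply: h; rewrite inE es orbT.
move: (IH hs); case: (omin s) => //= y hy.
lia.
Qed.

Lemma vand_pos X : sorted ltn X -> 0 < vandermonde X.
Proof.
move=> sX; apply: prod_pos_seq => j; rewrite mem_index_iota => /andP [_ hj] _.
apply: prod_pos_seq => i; rewrite mem_index_iota => /andP [_ hi] _.
by rewrite subn_gt0; apply: nth_lt.
Qed.

Theorem mainTheorem8 (m p k n : nat) :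
  1 <= m -> prime p -> 2 * m - 1 <= p ->
  k <= ((m.+1)./2).+1 ->
  (Posz n < Nk m p k)%R ->
  oge (ex n m p) (Posz (logn p n`!) - (Posz k - 1))%R.
Proof.
move=> m1 pp hp hk hN.
have p2 : 1 < p := prime_gt1 pp.
rewrite /ex; apply: oge_omin => e /mapP [l]; rewrite mem_filter => /andP [/eqP hcore lpart] ->.
move: lpart; rewrite /partitions mem_filter => /andP [/andP [hs /eqP hsum] _].
set X := degseq l.
have sX : sorted ltn X := degseq_sorted hs.
have uX : uniq X := degseq_uniq hs.
have szX : size X = size l := size_degseq l.
have sumX : sumn X = n + 'C(size X, 2) by rewrite degseq_sum hsum szX.
have hook : hookprod l = Pr X by rewrite /hookprod -/X prod_fact // mulKn // vand_pos.
have dv := Pr_dvd_fact uX sumX.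
have eF : logn p (Fdim l) = logn p n`! - logn p (Pr X) by rewrite /Fdim hsum hook logn_div.
have hle : logn p (Pr X) <= logn p n`! := dvdn_leq_log _ (fact_gt0 n) dv.
rewrite eF.
suff hV : logn p (Pr X) < k by lia.
rewrite ltnNge; apply/negP => hkV.
move: hN; apply/negP; rewrite -Order.TotalTheory.leNgt.
have eV := logn_Pr pp (J := sumn X) (fun x xX => mem_le_sumn xX).
have hc := core2_size_eq hs; simpl in hc; rewrite -/X hcore -szX in hc.
have hcm := bin2_dbl' m.+1; simpl in hcm.
have hcr := bin2_dbl' (size X).
have hb1 : codd X <= size X by rewrite /codd count_size.
case: (leqP k (G p X)) => hG.
  have [X' [u' s' e' c1 c2]] := moveK (ltnW p2) uX hG.
  have hL := Lcore u'; rewrite s' in hL.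
  have hb1' : codd X' <= size X by rewrite -s' /codd count_size.
  rewrite /Nk; case: ifP => hk2.
    have hkm : k <= m by lia.
    have hr : (size X - codd X + codd X = size X - codd X' + codd X')%N by lia.
    have hC : (2 * 'C(size X, 2) = (size X - codd X + codd X) * (size X - codd X + codd X - 1))%N.
      by rewrite subnK // hcr subn1.
    exact: (finalA m1 hk2 hr hcm hC hc sumX e' c1 c2 hL).
  have hL0 := L0 u'; rewrite s' in hL0.
  have e2 : m.+1./2.+1 = k by lia.
  rewrite e2 lez_nat; clear -e' sumX hL0; move: e' sumX hL0; set C := 'C(_, 2); set S := sumn X'; lia.
have k1 : 1 <= k by lia.
have [j hjr hj] : exists2 j, (2 <= j) && (j < (sumn X).+1) & 0 < G (p ^ j) X.
  case: (sumn X) eV => [|J] eV.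
    by move: hkV; rewrite eV big_geq //; lia.
  move: hkV; rewrite eV big_ltn // expn1 => hkV.
  have : 0 < \sum_(2 <= j < J.+2) G (p ^ j) X by lia.
  case: (boolP [exists j : 'I_(J.+2), (2 <= j) && (0 < G (p ^ j) X)]).
    by move=> /existsP [j /andP [h1 h2]]; exists j => //; rewrite h1 ltn_ord.
  move=> /existsPn hn hpos; exfalso; move: hpos; rewrite big1_seq // => j /andP [_].
  rewrite mem_index_iota => /andP [h1 h2].
  have := hn (Ordinal h2); rewrite /= h1 /=; case: (G _ _) => //.
move/andP: hjr => [j2 _].
have pj0 : 0 < p ^ j by rewrite expn_gt0; lia.
have := G_le_div pj0 uX sumX.
have hpj : p * p <= p ^ j.
  have -> : p * p = p ^ 2 by rewrite (expnS p 1) expn1.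
  apply: leq_pexp2l; lia.
move=> hG2.
have hpn : p * p <= n.
  have : 1 <= n %/ p ^ j by lia.
  rewrite leq_divRL // mul1n; lia.
apply: (Order.POrderTheory.le_trans (Nk_le_p2 p2 m1 hp k1 hk)).
by rewrite lez_nat.
Qed.
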